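(* Let $\rho\in\{1/2,1\}$, let $s>0$ and $\eta>0$ be real numbers, let $q\in\mathbb{C}$, and let $\epsilon$ be real with $1<\epsilon\le 1+\rho$. Define $\ell:(0,\infty)\to\mathbb{R}$ by $$\ell(\gamma) = -\rho\log(1+\gamma s) + \rho\,\frac{|q|^2}{\gamma^{-1}+s} + (\epsilon-1)\log\gamma - \eta\gamma .$$ Then $\ell$ has a single stationary point on $(0,\infty)$, and this stationary point corresponds to a maximum of $\ell$.
   Context: This function arises in a sparse Bayesian learning scheme: $\rho=1/2$ corresponds to a real signal model and $\rho=1$ to a complex one; $\epsilon$ is the shape parameter and $\eta$ the (positive) rate parameter of a gamma hyperprior; $s=\mathbf{h}^H\mathbf{C}^{-1}\mathbf{h}$ and $q=\mathbf{y}^H\mathbf{C}^{-1}\mathbf{h}$ for a nonzero vector $\mathbf{h}$, a vector $\mathbf{y}$, and a Hermitian positive definite matrix $\mathbf{C}$, so in particular $s>0$. The domain of $\ell$ is $(0,\infty)$. *)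

(* Defs.v *)
From Stdlib Require Import Reals.
From Coquelicot Require Import Coquelicot.
Open Scope R_scope.

Definition ell (rho s eta eps : R) (q : C) (g : R) : R :=
  - rho * ln (1 + g * s) + rho * ((Cmod q) ^ 2 / (/ g + s))
  + (eps - 1) * ln g - eta * g.

(* Main.v *)
Require Import Defs.
From Stdlib Require Import Reals Lra Psatz.
From Coquelicot Require Import Coquelicot.
Open Scope R_scope.
Definition D rho s eta eps (c g : R) :=
  - rho * s / (1 + g*s) + rho * c / ((1+g*s)^2) + (eps-1)/g - eta.
Lemma ell_deriv rho s eta eps q g : 0 < s -> 0 < g ->
  is_derive (ell rho s eta eps q) g (D rho s eta eps (Cmod q ^ 2) g).
Proof.
intros Hs Hg. unfold ell, D.
auto_derive.
- repeat split; try nra.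
  + intro H. assert (/g > 0) by (apply Rinv_0_lt_compat; lra). lra.
- assert (/g > 0) by (apply Rinv_0_lt_compat; lra).
  field. repeat split; try nra.
Qed.

Lemma DM rho s eta eps c g : 0 < s -> 0 < g ->
  D rho s eta eps c g * (1+g*s)^2 =
  (eps-1)/g + (2*(eps-1)*s - rho*s + rho*c - eta)
  - (s^2*(rho-(eps-1)) + 2*eta*s) * g - eta*s^2*g^2.
Proof. intros Hs Hg. unfold D. field. split; nra. Qed.

Definition M rho s eta eps c g :=
  (eps-1)/g + (2*(eps-1)*s - rho*s + rho*c - eta)
  - (s^2*(rho-(eps-1)) + 2*eta*s) * g - eta*s^2*g^2.

Lemma M_dec rho s eta eps c x y : 0 < s -> 0 < eta -> 1 < eps -> eps <= 1 + rho ->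
  0 < x -> x < y -> M rho s eta eps c y < M rho s eta eps c x.
Proof.
intros. unfold M.
assert ((eps-1)/y < (eps-1)/x).
{ unfold Rdiv. apply Rmult_lt_compat_l. lra. apply Rinv_lt_contravar; nra. }
assert (0 <= s^2*(rho-(eps-1))) by nra.
assert (eta*s^2*x^2 < eta*s^2*y^2).
{ apply Rmult_lt_compat_l. apply Rmult_lt_0_compat; [lra|]. apply pow_lt; lra. simpl; nra. }
assert ((s^2*(rho-(eps-1)) + 2*eta*s) * x <= (s^2*(rho-(eps-1)) + 2*eta*s) * y).
{ apply Rmult_le_compat_l; nra. }
lra.
Qed.

Lemma D_sign rho s eta eps c g : 0 < s -> 0 < g ->
  (0 <= M rho s eta eps c g -> 0 <= D rho s eta eps c g) /\
  (M rho s eta eps c g <= 0 -> D rho s eta eps c g <= 0) /\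
  (D rho s eta eps c g = 0 -> M rho s eta eps c g = 0).
Proof.
intros Hs Hg. pose proof (DM rho s eta eps c g Hs Hg) as H. fold (M rho s eta eps c g) in H.
assert (0 < (1+g*s)^2) by nra.
split; [|split]; intros.
- destruct (Rle_or_lt 0 (D rho s eta eps c g)); auto. nra.
- destruct (Rle_or_lt (D rho s eta eps c g) 0); auto. nra.
- rewrite H1 in H. lra.
Qed.

Lemma M_wdec rho s eta eps c x y : 0 < s -> 0 < eta -> 1 < eps -> eps <= 1 + rho ->
  0 < x -> x <= y -> M rho s eta eps c y <= M rho s eta eps c x.
Proof.
intros. destruct (Req_dec x y). subst; lra.
left; apply M_dec; lra.
Qed.

Lemma M_root rho s eta eps c : 0 < s -> 0 < eta -> 1 < eps -> eps <= 1 + rho -> 0 <= c ->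
  exists z, 0 < z /\ M rho s eta eps c z = 0.
Proof.
intros Hs He He1 He2 Hc.
set (a := eps - 1). set (b := 2*(eps-1)*s - rho*s + rho*c - eta).
set (p := s^2*(rho-(eps-1)) + 2*eta*s). set (r := eta*s^2).
assert (Hp : 0 < p) by (unfold p; nra).
assert (Hr : 0 < r) by (unfold r; apply Rmult_lt_0_compat; [lra|apply pow_lt; lra]).
set (N := fun g => - (a + b*g - p*g^2 - r*g^3)).
assert (HN : forall g, 0 < g -> N g = - g * M rho s eta eps c g).
{ intros g Hg. unfold N, M, a, b, p, r. field. lra. }
set (G := 1 + (a + Rabs b)/p).
assert (HG : 1 <= G).
{ unfold G. assert (0 <= (a + Rabs b)/p). apply Rdiv_le_0_compat. unfold a. pose proof (Rabs_pos b); lra. lra. lra. }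
assert (HMG : M rho s eta eps c G < 0).
{ replace (M rho s eta eps c G) with (a/G + b - p*G - r*G^2) by (unfold M, a, b, p, r; ring).
  assert (a/G <= a). { apply Rmult_le_reg_r with G. lra. unfold Rdiv. rewrite Rmult_assoc, Rinv_l by lra. unfold a; nra. }
  assert (p*G = p + (a + Rabs b)). { unfold G. field. lra. }
  assert (b <= Rabs b) by apply Rle_abs.
  assert (0 < r*G^2) by (apply Rmult_lt_0_compat; [lra| apply pow_lt; lra]).
  lra. }
destruct (IVT N 0 G) as [z [Hz1 Hz2]].
- unfold N. reg.
- lra.
- unfold N. unfold a. lra.
- rewrite HN by lra. nra.
- assert (z <> 0). { intro. subst z. unfold N in Hz2. unfold a in Hz2. lra. }
  exists z. split. lra. rewrite HN in Hz2 by lra.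
  apply Rmult_integral in Hz2. destruct Hz2; [lra|auto].
Qed.

Theorem proposition2 (rho s eta eps : R) (q : C) :
  (rho = 1/2 \/ rho = 1) -> 0 < s -> 0 < eta -> 1 < eps -> eps <= 1 + rho ->
  exists g0 : R,
    0 < g0 /\ is_derive (ell rho s eta eps q) g0 0 /\
    (forall g, 0 < g -> is_derive (ell rho s eta eps q) g 0 -> g = g0) /\
    (forall g, 0 < g -> ell rho s eta eps q g <= ell rho s eta eps q g0).
Proof.
intros Hrho Hs He He1 He2.
set (c := Cmod q ^ 2).
assert (Hc : 0 <= c) by (unfold c; apply pow2_ge_0).
destruct (M_root rho s eta eps c Hs He He1 He2 Hc) as [g0 [Hg0 HM0]].
assert (HD0 : D rho s eta eps c g0 = 0).
{ pose proof (DM rho s eta eps c g0 Hs Hg0). fold (M rho s eta eps c g0) in H.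
  rewrite HM0 in H. assert (0 < (1+g0*s)^2) by nra. nra. }
exists g0. split; [auto|split; [|split]].
- rewrite <- HD0. apply ell_deriv; auto.
- intros g Hg Hd.
  pose proof (ell_deriv rho s eta eps q g Hs Hg) as Hd'.
  apply is_derive_unique in Hd. apply is_derive_unique in Hd'. fold c in Hd'.
  rewrite Hd in Hd'.
  destruct (D_sign rho s eta eps c g Hs Hg) as [_ [_ H3]].
  assert (HMg : M rho s eta eps c g = 0) by (apply H3; auto).
  destruct (Rtotal_order g g0) as [H|[H|H]]; auto.
  + pose proof (M_dec rho s eta eps c g g0 Hs He He1 He2 Hg H). lra.
  + pose proof (M_dec rho s eta eps c g0 g Hs He He1 He2 Hg0 H). lra.
- intros g Hg.
  destruct (MVT_gen (ell rho s eta eps q) g g0 (D rho s eta eps c)) as [x [Hx Heq]].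
  + intros x Hx. apply ell_deriv; auto.
    assert (0 < Rmin g g0) by (apply Rmin_glb_lt; auto). lra.
  + intros x Hx. apply continuity_pt_filterlim. apply (@ex_derive_continuous R_AbsRing R_NormedModule (ell rho s eta eps q)).
    assert (0 < Rmin g g0) by (apply Rmin_glb_lt; auto).
    eexists. apply ell_deriv; auto. lra.
  + assert (0 < Rmin g g0) by (apply Rmin_glb_lt; auto).
    assert (Hx0 : 0 < x) by lra.
    destruct (D_sign rho s eta eps c x Hs Hx0) as [H1 [H2 _]].
    destruct (Rle_or_lt g g0) as [Hl|Hl].
    * rewrite Rmax_right in Hx by lra.
      assert (0 <= D rho s eta eps c x).
      { apply H1. rewrite <- HM0. apply M_wdec; lra. }
      nra.
    * rewrite Rmin_right in Hx by lra.
      assert (D rho s eta eps c x <= 0).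
      { apply H2. rewrite <- HM0. apply M_wdec; lra. }
      nra.
Qed.
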